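(* Let $(G,\preceq)$ be an oriented group with positive cone $C=\{x\in G\mid\mathbf{1}\preceq x\}$, and let $H$ be a subgroup of $G$. On the quotient set $G/H=\{\overline{x}=x\cdot H\mid x\in G\}$ define $\overline{x}\sqsubseteq\overline{y}\iff x^{-1}\cdot y\in C\cdot H$. Then $(G/H,\sqsubseteq)$ is an oriented set if and only if $$(\ast)\qquad \text{for all } q,r\in G:\ \mathbf{1}\preceq q\ \wedge\ \mathbf{1}\preceq r\ \wedge\ q\cdot r\in H\implies q\in H\wedge r\in H.$$ Moreover, if $(\ast)$ holds and $H$ is a normal subgroup of $G$, then $(G/H,\sqsubseteq)$ is an oriented group.
   Context: An orientation is a reflexive, antisymmetric binary relation; an oriented set is a set with an orientation. An oriented group is a group $G$ (operation $\cdot$, neutral element $\mathbf{1}$) with an orientation $\preceq$ such that $x\preceq y$ implies $x\cdot z\preceq y\cdot z$ and $z\cdot x\preceq z\cdot y$ for all $x,y,z\in G$. *)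

(* Defs.v *)
From Stdlib Require Import ClassicalEpsilon.



Section OrientedGroups.
Context {T : Type} (mul : T -> T -> T) (inv : T -> T) (one : T).

Record group_axioms : Prop := GroupAxioms {
  mulA : forall x y z, mul x (mul y z) = mul (mul x y) z;
  mul1g : forall x, mul one x = x;
  mulg1 : forall x, mul x one = x;
  mulVg : forall x, mul (inv x) x = one;
  mulgV : forall x, mul x (inv x) = one
}.

Definition orientation {U : Type} (R : U -> U -> Prop) : Prop :=
  (forall x, R x x) /\ (forall x y, R x y -> R y x -> x = y).

Definition oriented_group (le : T -> T -> Prop) : Prop :=
  group_axioms /\ orientation le /\
  (forall x y z, le x y -> le (mul x z) (mul y z) /\ le (mul z x) (mul z y)).

Definition subgroup (H : T -> Prop) : Prop :=
  H one /\ (forall x y, H x -> H y -> H (mul x y)) /\ (forall x, H x -> H (inv x)).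

Definition normal_subgroup (H : T -> Prop) : Prop :=
  subgroup H /\ (forall g h, H h -> H (mul (mul g h) (inv g))).

Variables (le : T -> T -> Prop) (H : T -> Prop).

Definition cone (x : T) : Prop := le one x.
Definition in_CH (z : T) : Prop := exists c h, cone c /\ H h /\ z = mul c h.

Definition coset (x : T) : T -> Prop := fun y => H (mul (inv x) y).
Definition quot : Type := { S : T -> Prop | exists x, S = coset x }.
Definition qclass (x : T) : quot := exist _ (coset x) (ex_intro _ x eq_refl).

Definition qle (A B : quot) : Prop :=
  exists x y, proj1_sig A = coset x /\ proj1_sig B = coset y /\ in_CH (mul (inv x) y).

Definition qrep (A : quot) : T :=
  proj1_sig (constructive_indefinite_description _ (proj2_sig A)).
Definition qmul (A B : quot) : quot := qclass (mul (qrep A) (qrep B)).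
Definition qinv (A : quot) : quot := qclass (inv (qrep A)).
Definition qone : quot := qclass one.

Definition star_condition : Prop :=
  forall q r, le one q -> le one r -> H (mul q r) -> H q /\ H r.

End OrientedGroups.

(* Main.v *)
Require Import Defs.
From Stdlib Require Import ClassicalEpsilon FunctionalExtensionality PropExtensionality ProofIrrelevance.

Section G.
Context {T : Type} (mul : T -> T -> T) (inv : T -> T) (one : T).

Lemma gA (Hg : group_axioms mul inv one) x y z : mul x (mul y z) = mul (mul x y) z.
Proof. destruct Hg; auto. Qed.
Lemma g1l (Hg : group_axioms mul inv one) x : mul one x = x.
Proof. destruct Hg; auto. Qed.
Lemma g1r (Hg : group_axioms mul inv one) x : mul x one = x.
Proof. destruct Hg; auto. Qed.
Lemma gVl (Hg : group_axioms mul inv one) x : mul (inv x) x = one.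
Proof. destruct Hg; auto. Qed.
Lemma gVr (Hg : group_axioms mul inv one) x : mul x (inv x) = one.
Proof. destruct Hg; auto. Qed.
Lemma gKV (Hg : group_axioms mul inv one) a x : mul (mul a x) (inv x) = a.
Proof. rewrite <- (gA Hg), (gVr Hg), (g1r Hg); auto. Qed.
Lemma gVK (Hg : group_axioms mul inv one) a x : mul (mul a (inv x)) x = a.
Proof. rewrite <- (gA Hg), (gVl Hg), (g1r Hg); auto. Qed.
Lemma ginv_uniq (Hg : group_axioms mul inv one) a b : mul a b = one -> inv a = b.
Proof. intro E. rewrite <- (g1r Hg (inv a)), <- E, (gA Hg), (gVl Hg), (g1l Hg); auto. Qed.
Lemma ginv1 (Hg : group_axioms mul inv one) : inv one = one.
Proof. apply ginv_uniq; auto. apply g1l; auto. Qed.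
Lemma ginvK (Hg : group_axioms mul inv one) x : inv (inv x) = x.
Proof. apply ginv_uniq; auto. apply gVl; auto. Qed.
Lemma ginvM (Hg : group_axioms mul inv one) x y : inv (mul x y) = mul (inv y) (inv x).
Proof. apply ginv_uniq; auto. rewrite (gA Hg), (gKV Hg), (gVr Hg); auto. Qed.
End G.

Ltac gs Hg := repeat progress (rewrite ?(gA _ _ _ Hg), ?(ginvM _ _ _ Hg), ?(ginvK _ _ _ Hg),
  ?(ginv1 _ _ _ Hg), ?(gKV _ _ _ Hg), ?(gVK _ _ _ Hg), ?(gVr _ _ _ Hg), ?(gVl _ _ _ Hg),
  ?(g1l _ _ _ Hg), ?(g1r _ _ _ Hg)).

Section Q.
Context {T : Type} (mul : T -> T -> T) (inv : T -> T) (one : T) (le : T -> T -> Prop) (H : T -> Prop).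

Lemma coset_eq (Hg : group_axioms mul inv one) (HH : subgroup mul inv one H) x y :
  coset mul inv H x = coset mul inv H y <-> H (mul (inv x) y).
Proof.
  destruct HH as [H1 [HM HI]]. split.
  - intro E. assert (coset mul inv H y y) as C. { unfold coset. rewrite (gVl _ _ _ Hg). auto. }
    rewrite <- E in C. exact C.
  - intro K. extensionality z. apply propositional_extensionality. unfold coset. split; intro Z.
    + replace (mul (inv y) z) with (mul (inv (mul (inv x) y)) (mul (inv x) z)) by (gs Hg; auto). auto.
    + replace (mul (inv x) z) with (mul (mul (inv x) y) (mul (inv y) z)) by (gs Hg; auto). auto.
Qed.

Lemma qeq (A B : quot mul inv H) : proj1_sig A = proj1_sig B -> A = B.
Proof. destruct A, B; simpl; intros ->. f_equal. apply proof_irrelevance. Qed.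

Lemma qsurj (A : quot mul inv H) : exists a, A = qclass mul inv H a.
Proof.
  exists (qrep mul inv H A). apply qeq. simpl. unfold qrep.
  destruct (constructive_indefinite_description _ _). simpl. auto.
Qed.

Lemma qclass_eq (Hg : group_axioms mul inv one) (HH : subgroup mul inv one H) x y :
  qclass mul inv H x = qclass mul inv H y <-> H (mul (inv x) y).
Proof.
  rewrite <- coset_eq; auto. split; intro E.
  - apply (f_equal (@proj1_sig _ _)) in E. exact E.
  - apply qeq. exact E.
Qed.

Lemma cone_conj (Hg : group_axioms mul inv one) (HO : oriented_group mul inv one le) c g :
  cone one le c -> cone one le (mul (mul g c) (inv g)).
Proof.
  destruct HO as [_ [_ HC]]. unfold cone. intro C.
  destruct (HC _ _ g C) as [_ C1]. rewrite (g1r _ _ _ Hg) in C1.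
  destruct (HC _ _ (inv g) C1) as [C2 _]. rewrite (gVr _ _ _ Hg) in C2. exact C2.
Qed.

Lemma CH_r (Hg : group_axioms mul inv one) (HH : subgroup mul inv one H) z k :
  in_CH mul one le H z -> H k -> in_CH mul one le H (mul z k).
Proof.
  destruct HH as [H1 [HM HI]]. intros [c [h [C [Hh ->]]]] K.
  exists c, (mul h k). repeat split; auto. gs Hg. auto.
Qed.

Lemma CH_l (Hg : group_axioms mul inv one) (HO : oriented_group mul inv one le)
  (HH : subgroup mul inv one H) z k :
  in_CH mul one le H z -> H k -> in_CH mul one le H (mul k z).
Proof.
  destruct HH as [H1 [HM HI]]. intros [c [h [C [Hh ->]]]] K.
  exists (mul (mul k c) (inv k)), (mul k h). repeat split; auto.
  - apply cone_conj; auto.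
  - gs Hg. auto.
Qed.

Lemma CH_conj (Hg : group_axioms mul inv one) (HO : oriented_group mul inv one le)
  (HH : normal_subgroup mul inv one H) z g :
  in_CH mul one le H z -> in_CH mul one le H (mul (mul g z) (inv g)).
Proof.
  destruct HH as [_ HN]. intros [c [h [C [Hh ->]]]].
  exists (mul (mul g c) (inv g)), (mul (mul g h) (inv g)). repeat split; auto.
  - apply cone_conj; auto.
  - gs Hg. auto.
Qed.

Lemma qle_class (Hg : group_axioms mul inv one) (HO : oriented_group mul inv one le)
  (HH : subgroup mul inv one H) x y :
  qle mul inv one le H (qclass mul inv H x) (qclass mul inv H y) <-> in_CH mul one le H (mul (inv x) y).
Proof.
  split.
  - intros [x' [y' [Ex [Ey Z]]]]. simpl in Ex, Ey.
    apply coset_eq in Ex; auto. apply coset_eq in Ey; auto.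
    replace (mul (inv x) y) with (mul (mul (inv x) x') (mul (mul (inv x') y') (inv (mul (inv y) y'))))
      by (gs Hg; auto).
    apply CH_l; auto. apply CH_r; auto. destruct HH as [_ [_ HI]]; auto.
  - intro Z. exists x, y. simpl. auto.
Qed.

End Q.

Theorem mainTheorem11 (T : Type) (mul : T -> T -> T) (inv : T -> T) (one : T)
  (le : T -> T -> Prop) (H : T -> Prop) :
  oriented_group mul inv one le -> subgroup mul inv one H ->
  (orientation (qle mul inv one le H) <-> star_condition mul one le H) /\
  (star_condition mul one le H -> normal_subgroup mul inv one H ->
   oriented_group (qmul mul inv H) (qinv mul inv H) (qone mul inv one H)
     (qle mul inv one le H)).
Proof.
  intros HO HH.
  assert (Hg : group_axioms mul inv one) by (destruct HO; auto).
  assert (Hrefl : forall x, le x x) by (destruct HO as [_ [[R _] _]]; auto).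
  pose proof HH as [H1 [HM HI]].
  assert (P1 : star_condition mul one le H -> orientation (qle mul inv one le H)).
  { intro S. split.
    - intro A. destruct (qsurj mul inv H A) as [a ->]. apply qle_class; auto.
      exists one, one. unfold cone. repeat split; auto. gs Hg. auto.
    - intros A B. destruct (qsurj mul inv H A) as [x ->]. destruct (qsurj mul inv H B) as [y ->].
      rewrite !qle_class; auto. intros [c [h [C [Hh Ec]]]] [c' [h' [C' [Hh' Ec']]]].
      apply (qclass_eq mul inv one H); auto.
      assert (c = mul (mul (inv x) y) (inv h)) as E1 by (rewrite Ec; gs Hg; auto).
      assert (c' = mul (mul (inv y) x) (inv h')) as E2 by (rewrite Ec'; gs Hg; auto).
      assert (Hc : H c).
      { apply (S c (mul (mul h c') (inv h))); auto.
        - apply cone_conj; auto.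
        - replace (mul c (mul (mul h c') (inv h))) with (inv (mul h h')) by (subst c c'; gs Hg; auto).
          auto. }
      rewrite Ec. auto. }
  split; [split|].
  - intros [R AS] q r Cq Cr Hqr.
    assert (Hq : H q).
    { assert (E : qclass mul inv H one = qclass mul inv H q).
      { apply AS.
        - apply qle_class; auto. exists q, one. repeat split; auto. gs Hg. auto.
        - exists q, (mul q r). simpl. split; auto. split.
          + apply (coset_eq mul inv one H); gs Hg; auto.
          + exists r, one. repeat split; auto. gs Hg. auto. }
      apply (qclass_eq mul inv one H) in E; auto. rewrite (ginv1 _ _ _ Hg), (g1l _ _ _ Hg) in E. auto. }
    split; auto.
    replace r with (mul (inv q) (mul q r)) by (gs Hg; auto). auto.
  - exact P1.
  - intros S HN. pose proof HN as [_ HNc].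
    assert (RC : forall x, H (mul (inv x) (qrep mul inv H (qclass mul inv H x)))).
    { intro x. apply (coset_eq mul inv one H); auto. unfold qrep.
      destruct (constructive_indefinite_description _ _). simpl. auto. }
    assert (QM : forall x y, qmul mul inv H (qclass mul inv H x) (qclass mul inv H y) = qclass mul inv H (mul x y)).
    { intros x y. unfold qmul. apply (qclass_eq mul inv one H); auto.
      pose proof (RC x) as Kx. pose proof (RC y) as Ky.
      set (x' := qrep mul inv H (qclass mul inv H x)) in *.
      set (y' := qrep mul inv H (qclass mul inv H y)) in *.
      replace (mul (inv (mul x' y')) (mul x y)) with
        (mul (inv (mul (inv y) y')) (mul (mul (inv y) (inv (mul (inv x) x'))) (inv (inv y))))
        by (gs Hg; auto).
      auto. }
    assert (QI : forall x, qinv mul inv H (qclass mul inv H x) = qclass mul inv H (inv x)).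
    { intros x. unfold qinv. apply (qclass_eq mul inv one H); auto.
      pose proof (RC x) as Kx.
      set (x' := qrep mul inv H (qclass mul inv H x)) in *.
      replace (mul (inv (inv x')) (inv x)) with (mul (mul x (mul (inv x) x')) (inv x)) by (gs Hg; auto).
      auto. }
    assert (QO : qone mul inv one H = qclass mul inv H one) by reflexivity.
    split; [|split].
    + constructor.
      * intros A B Z. destruct (qsurj mul inv H A) as [a ->].
        destruct (qsurj mul inv H B) as [b ->]. destruct (qsurj mul inv H Z) as [z ->].
        rewrite !QM. f_equal. gs Hg. auto.
      * intros A. destruct (qsurj mul inv H A) as [a ->]. rewrite QO, QM. f_equal. gs Hg. auto.
      * intros A. destruct (qsurj mul inv H A) as [a ->]. rewrite QO, QM. f_equal. gs Hg. auto.
      * intros A. destruct (qsurj mul inv H A) as [a ->]. rewrite QO, QI, QM. f_equal. gs Hg. auto.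
      * intros A. destruct (qsurj mul inv H A) as [a ->]. rewrite QO, QI, QM. f_equal. gs Hg. auto.
    + apply P1; auto.
    + intros A B Z. destruct (qsurj mul inv H A) as [x ->].
      destruct (qsurj mul inv H B) as [y ->]. destruct (qsurj mul inv H Z) as [z ->].
      rewrite !QM, !qle_class; auto. intro W. split.
      * replace (mul (inv (mul x z)) (mul y z)) with (mul (mul (inv z) (mul (inv x) y)) (inv (inv z)))
          by (gs Hg; auto).
        apply CH_conj; auto.
      * replace (mul (inv (mul z x)) (mul z y)) with (mul (inv x) y) by (gs Hg; auto). auto.
Qed.
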